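(* Let $G$ be a finite group and $(c,\kappa_R,\kappa_L,b,a)\in\widetilde{\mathcal{PD}}(G)$. Set $\tilde c(g,h,k):=(-1)^{b(g)\cdot\kappa_R^{a(g)}(h,k)}c(g,h,k)$. Then $(\tilde c,\kappa_R,\kappa_R,0,a)\in\widetilde{\mathcal{PD}}(G)$ and $(c,\kappa_R,\kappa_L,b,a)\sim(\tilde c,\kappa_R,\kappa_R,0,a)$.
   Context: $\mathbb Z_2=\{0,1\}$ (additive group), $\mathrm U(1)$ multiplicative. For $A\in\{\mathbb Z_2,\mathrm U(1)\}$, $A\oplus A$ has componentwise group operation and the $\mathbb Z_2$-action $x^{a}=\begin{pmatrix}0&1\\1&0\end{pmatrix}^ax$ (swap components when $a=1$). $C^n(G,A\oplus A)$ denotes all maps $G^n\to A\oplus A$; $H^1(G,\mathbb Z_2)$ denotes group homomorphisms $G\to\mathbb Z_2$. For $a\in H^1(G,\mathbb Z_2)$: on $\mathbb Z_2\oplus\mathbb Z_2$-valued cochains, $d^1_ax(g,h)=x^{a(g)}(h)+x(g)-x(gh)$, $d^2_ay(g,h,k)=y^{a(g)}(h,k)+y(g,hk)-y(gh,k)-y(g,h)$; on $\mathrm U(1)\oplus\mathrm U(1)$-valued cochains (multiplicatively), $d^2_ay(g,h,k)=\frac{y^{a(g)}(h,k)\,y(g,hk)}{y(gh,k)\,y(g,h)}$, $d^3_az(g,h,k,f)=\frac{z^{a(g)}(h,k,f)\,z(g,hk,f)\,z(g,h,k)}{z(gh,k,f)\,z(g,h,kf)}$. For $x,y\in\mathbb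 Z_2\oplus\mathbb Z_2$, $x\cdot y:=(x_+y_+,x_-y_-)$ and $(-1)^x:=((-1)^{x_+},(-1)^{x_-})$. $\widetilde{\mathcal{PD}}(G)$ is the set of pentads $(c,\kappa_R,\kappa_L,b,a)$ with $c\in C^3(G,\mathrm U(1)\oplus\mathrm U(1))$, $\kappa_R,\kappa_L\in C^2(G,\mathbb Z_2\oplus\mathbb Z_2)$, $b\in C^1(G,\mathbb Z_2\oplus\mathbb Z_2)$, $a\in H^1(G,\mathbb Z_2)$ with $d^1_ab=\kappa_L+\kappa_R$, $d^2_a\kappa_R=0$, $d^2_a\kappa_L=0$, $d^3_ac(g,h,k,f)=(-1)^{\kappa_L(g,h)\cdot\kappa_R^{a(gh)}(k,f)}$. The relation $\sim$: $(c^{(1)},\kappa_R^{(1)},\kappa_L^{(1)},b^{(1)},a^{(1)})\sim(c^{(2)},\kappa_R^{(2)},\kappa_L^{(2)},b^{(2)},a^{(2)})$ iff $a^{(1)}=a^{(2)}=:a$ and there exist $m\in C^1(G,\mathbb Z_2\oplus\mathbb Z_2)$, $\sigma\in C^2(G,\mathrm U(1)\oplus\mathrm U(1))$ with $\kappa_R^{(2)}=d^1_am+\kappa_R^{(1)}$, $\kappa_L^{(2)}=d^1_ab^{(2)}-d^1_ab^{(1)}-d^1_am+\kappa_L^{(1)}$, and $c^{(2)}(g,h,k)=(-1)^{\kappa_L^{(1)}(g,h)\cdot m^{a(gh)}(k)}(-1)^{(b^{(2)}(g)-b^{(1)}(g)-m(g))\cdot(\kappa_R^{(2)})^{a(g)}(h,k)}d^2_a\sigma(g,h,k)c^{(1)}(g,h,k)$.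 *)

(* Defs.v *)
From HB Require Import structures.
From mathcomp Require Import all_boot all_order all_algebra all_fingroup.
From mathcomp Require Import complex reals.
Set Implicit Arguments. Unset Strict Implicit. Unset Printing Implicit Defensive.
Import GRing.Theory Num.Theory.
Local Open Scope ring_scope.

(* Conventions:
   - Z_2 is the ring 'Z_2 (its additive group is the group Z_2 = {0,1}).
   - Z_2 (+) Z_2 is the product zmodType 'Z_2 * 'Z_2 (componentwise).
   - U(1) (+) U(1) is modelled as pairs of complex numbers R[i] (R a realType),
     each component of modulus 1; the group law is componentwise multiplication.
   - G is the whole carrier of a finGroupType gT; n-cochains are curried maps. *)

Definition Z22 := ('Z_2 * 'Z_2)%type.

Definition actZ (a : 'Z_2) (x : Z22) : Z22 := if a == 0 then x else (x.2, x.1).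
Definition dotZ (x y : Z22) : Z22 := (x.1 * y.1, x.2 * y.2).

Section UOps.
Variable R : realType.
Definition U2 := (R[i] * R[i])%type.
Definition isU (z : U2) : Prop := `|z.1| = 1 /\ `|z.2| = 1.
Definition actU (a : 'Z_2) (z : U2) : U2 := if a == 0 then z else (z.2, z.1).
Definition mulU (z w : U2) : U2 := (z.1 * w.1, z.2 * w.2).
Definition divU (z w : U2) : U2 := (z.1 / w.1, z.2 / w.2).
Definition signU (x : Z22) : U2 :=
  ((-1) ^+ (nat_of_ord x.1), (-1) ^+ (nat_of_ord x.2)).
End UOps.

Section Cochains.
Variables (R : realType) (gT : finGroupType).

Definition is_hom_Z2 (a : gT -> 'Z_2) : Prop :=
  forall g h : gT, a (g * h)%g = (a g + a h)%R.

Definition d1 (a : gT -> 'Z_2) (x : gT -> Z22) (g h : gT) : Z22 :=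
  (actZ (a g) (x h) + x g - x (g * h)%g)%R.

Definition d2 (a : gT -> 'Z_2) (y : gT -> gT -> Z22) (g h k : gT) : Z22 :=
  (actZ (a g) (y h k) + y g (h * k)%g - y (g * h)%g k - y g h)%R.

Definition d2U (a : gT -> 'Z_2) (y : gT -> gT -> U2 R) (g h k : gT) : U2 R :=
  divU (mulU (actU (a g) (y h k)) (y g (h * k)%g)) (mulU (y (g * h)%g k) (y g h)).

Definition d3U (a : gT -> 'Z_2) (z : gT -> gT -> gT -> U2 R) (g h k f : gT)
  : U2 R :=
  divU (mulU (mulU (actU (a g) (z h k f)) (z g (h * k)%g f)) (z g h k))
       (mulU (z (g * h)%g k f) (z g h (k * f)%g)).

Definition PDt (c : gT -> gT -> gT -> U2 R) (kR kL : gT -> gT -> Z22)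
  (b : gT -> Z22) (a : gT -> 'Z_2) : Prop :=
  [/\ (forall g h k, isU (c g h k)) /\ is_hom_Z2 a,
      forall g h, d1 a b g h = (kL g h + kR g h)%R,
      forall g h k, d2 a kR g h k = 0%R,
      forall g h k, d2 a kL g h k = 0%R &
      forall g h k f, d3U a c g h k f
                      = signU R (dotZ (kL g h) (actZ (a (g * h)%g) (kR k f)))].

Definition PDrel
  (c1 : gT -> gT -> gT -> U2 R) (kR1 kL1 : gT -> gT -> Z22) (b1 : gT -> Z22)
  (a1 : gT -> 'Z_2)
  (c2 : gT -> gT -> gT -> U2 R) (kR2 kL2 : gT -> gT -> Z22) (b2 : gT -> Z22)
  (a2 : gT -> 'Z_2) : Prop :=
  a1 = a2 /\
  exists (m : gT -> Z22) (sigma : gT -> gT -> U2 R),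
    [/\ forall g h, isU (sigma g h),
        forall g h, kR2 g h = (d1 a1 m g h + kR1 g h)%R,
        forall g h, kL2 g h
                    = (d1 a1 b2 g h - d1 a1 b1 g h - d1 a1 m g h + kL1 g h)%R &
        forall g h k, c2 g h k =
          mulU (mulU (mulU
            (signU R (dotZ (kL1 g h) (actZ (a1 (g * h)%g) (m k))))
            (signU R (dotZ (b2 g - b1 g - m g)%R (actZ (a1 g) (kR2 h k)))))
            (d2U a1 sigma g h k))
            (c1 g h k)].
End Cochains.

(* Main.v *)
Require Import Defs.
From HB Require Import structures.
From mathcomp Require Import all_boot all_order all_algebra all_fingroup.
From mathcomp Require Import complex reals.
From mathcomp Require Import ring.
Import GRing.Theory Num.Theory.
Local Open Scope ring_scope.

Lemma oppZ (x : Z22) : - x = x.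
Proof. case: x => [x y]. by apply/eqP; case: x => [[|[|?]] ?]; case: y=> [[|[|?]] ?]. Qed.

Lemma addZZ (x : Z22) : x + x = 0.
Proof. case: x => [x y]. by apply/eqP; case: x => [[|[|?]] ?]; case: y=> [[|[|?]] ?]. Qed.

Lemma twoZ : (1 + 1 : Z22) = 0.
Proof. by apply/eqP. Qed.

Lemma dotZE (x y : Z22) : dotZ x y = x * y.
Proof. by []. Qed.

Lemma Z2_cases (a : 'Z_2) : a = 0 \/ a = 1.
Proof. case: a => [[|[|n]] Hn]; [left|right|by []]; by apply/eqP. Qed.

Lemma actZ0 (a : 'Z_2) x : a = 0 -> actZ a x = x.
Proof. by move=> ->. Qed.
Lemma actZ1 (a : 'Z_2) (x : Z22) : a = 1 -> actZ a x = (x.2, x.1).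
Proof. by move=> ->. Qed.

Lemma actZD a (x y : Z22) : actZ a (x + y) = actZ a x + actZ a y.
Proof. by case: (Z2_cases a) => ->. Qed.
Lemma actZM a (x y : Z22) : actZ a (x * y) = actZ a x * actZ a y.
Proof. by case: (Z2_cases a) => ->. Qed.
Lemma actZN a (x : Z22) : actZ a (- x) = - actZ a x.
Proof. by case: (Z2_cases a) => ->. Qed.
Lemma actZ_0 a : actZ a 0 = 0.
Proof. by case: (Z2_cases a) => ->. Qed.
Lemma actZA a b (x : Z22) : actZ a (actZ b x) = actZ (a + b) x.
Proof. by case: (Z2_cases a) => ->; case: (Z2_cases b) => ->; case: x. Qed.

Section U.
Variable R : realType.

Definition sg (x : 'Z_2) : R[i] := (-1) ^+ (nat_of_ord x).

Lemma sgD x y : sg (x + y) = sg x * sg y.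
Proof.
by case: (Z2_cases x) => ->; case: (Z2_cases y) => ->; rewrite /sg /= ?expr0 ?expr1 ?mul1r ?mulr1 ?mulrNN ?mulr1.
Qed.
Lemma sgN x : sg (- x) = sg x.
Proof. by case: (Z2_cases x) => ->. Qed.
Lemma sgV x : (sg x)^-1 = sg x.
Proof. by case: (Z2_cases x) => ->; rewrite /sg /= ?expr0 ?expr1 ?invr1 ?invrN1. Qed.
Lemma sg_norm x : `|sg x| = 1.
Proof. by rewrite /sg normrX normrN1 expr1n. Qed.

Lemma signUE (x : Z22) : signU R x = (sg x.1, sg x.2).
Proof. by []. Qed.

Lemma signUD (x y : Z22) : signU R (x + y) = mulU (signU R x) (signU R y).
Proof. by rewrite !signUE /mulU /= !sgD. Qed.

Lemma signU_act a (x : Z22) : actU a (signU R x) = signU R (actZ a x).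
Proof. by case: (Z2_cases a) => ->. Qed.

Variable gT : finGroupType.

Lemma d3U_mul a (x y : gT -> gT -> gT -> U2 R) g h k f :
  d3U a (fun g h k => mulU (x g h k) (y g h k)) g h k f
  = mulU (d3U a x g h k f) (d3U a y g h k f).
Proof.
rewrite /d3U /divU /mulU /actU; case: (a g == 0) => /=; congr pair; rewrite !invfM; ring.
Qed.

Lemma d3U_sign a (B : gT -> gT -> gT -> Z22) g h k f :
  d3U a (fun g h k => signU R (B g h k)) g h k f
  = signU R (actZ (a g) (B h k f) + B g (h * k)%g f + B g h k
             - B (g * h)%g k f - B g h (k * f)%g).
Proof.
rewrite /d3U signU_act /divU /mulU !signUE /=; congr pair;
  rewrite !sgD !sgN !invfM !sgV; ring.
Qed.

End U.

Theorem lemma2p4 (R : realType) (gT : finGroupType)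
  (c : gT -> gT -> gT -> U2 R) (kR kL : gT -> gT -> Z22) (b : gT -> Z22)
  (a : gT -> 'Z_2) :
  PDt c kR kL b a ->
  let ct : gT -> gT -> gT -> U2 R :=
    fun g h k => mulU (signU R (dotZ (b g) (actZ (a g) (kR h k)))) (c g h k) in
  PDt ct kR kR (fun _ => 0) a /\
  PDrel c kR kL b a ct kR kR (fun _ => 0) a.
Proof.
case=> [[cU ahom] Hb HR HL Hc] ct.
have d10 : forall g h, d1 a (fun _ => 0) g h = 0.
  by move=> g h; rewrite /d1 actZ_0 !addr0 subr0.
split.
  split => //.
  - split => // g h k; rewrite /ct /isU /mulU /=.
    case: (cU g h k) => H1 H2; rewrite !normrM H1 H2 !mulr1.
    by split; rewrite normrX normrN1 expr1n.
  - by move=> g h; rewrite d10 addZZ.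
  move=> g h k f.
  rewrite /ct d3U_mul d3U_sign Hc -signUD; congr (signU R _).
  rewrite !dotZE !actZM !actZA -!ahom.
  have H1 := Hb g h; have H2 := HR h k f.
  move: H1 H2; rewrite /d1 /d2 => H1 H2.
  have H2' := congr1 (actZ (a g)) H2.
  rewrite !actZD !actZN actZA -ahom actZ_0 in H2'.
  have -> : kL g h = actZ (a g) (b h) + b g - b (g * h)%g - kR g h.
    by rewrite H1 addrK.
  set X := actZ (a (g * h)%g) (kR k f).
  set u := actZ (a g) (kR h (k * f)%g).
  set v := actZ (a g) (kR (h * k)%g f).
  set w := actZ (a g) (kR h k).
  set p := actZ (a g) (b h).
  rewrite -[X in _ = X](oppZ); apply/eqP; rewrite -subr_eq0 opprK; apply/eqP.
  set q := b g; set r := b (g * h)%g; set K := kR g h.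
  rewrite -/X -/u -/v -/w in H2'.
  transitivity ((1+1)*(p*X - r*X) + q*(X+u-v-w) + (1+1)*(q*(v+w-u))).
    ring.
  by rewrite H2' twoZ !mul0r mulr0 !addr0.
split=> //.
exists (fun _ => 0), (fun _ _ => (1, 1)); split.
- by move=> g h; rewrite /isU /= normr1.
- by move=> g h; rewrite d10 add0r.
- by move=> g h; rewrite !d10 Hb -[LHS]oppZ; ring.
move=> g h k; rewrite /ct actZ_0 sub0r subr0 oppZ.
have -> : d2U a (fun _ _ => (1, 1) : U2 R) g h k = (1, 1).
  by rewrite /d2U /divU /mulU /actU; case: ifP => _ /=; rewrite !mul1r invr1.
rewrite !dotZE mulr0 !signUE /mulU /=.
by rewrite /sg /= expr0 !mul1r !mulr1.
Qed.
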